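(* Let $c\ge 0$, $m\ge 2$, and let $x=((x^1,n_1),\dots,(x^q,n_q))$ be a non-convergent Nash equilibrium of the best-worst rule $s=(c,m)$. Then $n_i\le 2$ for every $i\in[q]$, and $n_1=n_q=2$. In particular, for $m=3$ no non-convergent Nash equilibrium exists.
   Context: Setting: voters' ideal points are distributed uniformly (unit mass, Lebesgue measure) on $[0,1]$. There are $m$ candidates; a profile is $x=(x_1,\dots,x_m)\in[0,1]^m$. A voter with ideal point $y$ ranks candidates by distance $|x_i-y|$ (closer is better); ties are broken by a fair lottery (uniformly random strict order among tied candidates). Under the best-worst rule $s=(c,m)$ ($c\ge0$), a candidate receives $1$ point from each voter ranking her first, $-c$ from each voter ranking her last ($m$-th), and $0$ otherwise; $v_i(x)$ is candidate $i$'s expected total points. A (pure-strategy Nash) equilibrium is a profile $x^*$ with $v_i(x^* )\ge v_i(t,x^*_{-i})$ for all $i$ and $t\in[0,1]$ ($(t,x_{-i})$ is $x$ with $x_i$ replaced by $t$); it is non-convergent if at least two platforms are distinct. $[n]=\{1,\dots,n\}$. A profile determines its distinct occupied positions $x^1<\dots<x^q$, with $n_j$ the number of candidates at $x^j$; we write $x=((x^1,n_1),\dots,(x^q,n_q))$. *)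

(* Defs.v *)
From Stdlib Require Import Reals Lra List.
Import ListNotations.
Open Scope R_scope.

Definition Rleb (a b : R) : bool := if Rle_dec a b then true else false.
Definition Reqb (a b : R) : bool := if Req_EM_T a b then true else false.

(* A profile of m candidates: x : nat -> R, candidates are indices 0..m-1. *)
Definition dist (x : nat -> R) (j : nat) (y : R) : R := Rabs (x j - y).

(* voter y ranks candidate i (among ties) first / last with positive probability *)
Definition closest (m : nat) (x : nat -> R) (i : nat) (y : R) : bool :=
  forallb (fun j => Rleb (dist x i y) (dist x j y)) (seq 0 m).
Definition farthest (m : nat) (x : nat -> R) (i : nat) (y : R) : bool :=
  forallb (fun j => Rleb (dist x j y) (dist x i y)) (seq 0 m).

Definition ntied (m : nat) (x : nat -> R) (i : nat) (y : R) : nat :=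
  length (filter (fun j => Reqb (dist x j y) (dist x i y)) (seq 0 m)).

(* Expected points candidate i receives from voter y under the best-worst
   rule s = (c,m), ties broken by a fair lottery (uniform random strict order
   among tied candidates): P(first) = 1/#tied if i is among the closest,
   P(last) = 1/#tied if i is among the farthest. *)
Definition score (c : R) (m : nat) (x : nat -> R) (i : nat) (y : R) : R :=
  (if closest m x i y then 1 / INR (ntied m x i y) else 0)
  - c * (if farthest m x i y then 1 / INR (ntied m x i y) else 0).

(* v_i(x) = v : expected total points, integrating over voters uniform on [0,1] *)
Definition value (c : R) (m : nat) (x : nat -> R) (i : nat) (v : R) : Prop :=
  exists pr : Riemann_integrable (score c m x i) 0 1, RiemannInt pr = v.

Definition upd (x : nat -> R) (i : nat) (t : R) : nat -> R :=
  fun j => if Nat.eq_dec j i then t else x j.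

Definition profile (m : nat) (x : nat -> R) : Prop :=
  forall j, (j < m)%nat -> 0 <= x j <= 1.

Definition nash (c : R) (m : nat) (x : nat -> R) : Prop :=
  profile m x /\
  forall i, (i < m)%nat -> forall t, 0 <= t <= 1 ->
    forall v v', value c m x i v -> value c m (upd x i t) i v' -> v' <= v.

Definition nonconvergent (m : nat) (x : nat -> R) : Prop :=
  exists j k, (j < m)%nat /\ (k < m)%nat /\ x j <> x k.

Definition mult (m : nat) (x : nat -> R) (j : nat) : nat :=
  length (filter (fun k => Reqb (x k) (x j)) (seq 0 m)).

(* Main.v *)
Require Import Defs.
From Stdlib Require Import Reals List Lra Lia.
From Coquelicot Require Import Coquelicot.
Import Defs.
Import ListNotations.
Open Scope R_scope.

Ltac unabs := repeat match goal with
 | H: context [Rabs ?t] |- _ => let h := fresh in destruct (Rcase_abs t) as [h|h];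
     [rewrite (Rabs_left t h) in * | rewrite (Rabs_right t h) in *]
 | |- context [Rabs ?t] => let h := fresh in destruct (Rcase_abs t) as [h|h];
     [rewrite (Rabs_left t h) in * | rewrite (Rabs_right t h) in *]
 end.

Lemma pc_exRInt (f : R -> R) (L : list R) : forall a b, a <= b ->
  (forall u v, a <= u -> u < v -> v <= b -> (forall y, u < y < v -> ~ In y L) ->
     forall y1 y2, u < y1 < v -> u < y2 < v -> f y1 = f y2) ->
  ex_RInt f a b.
Proof.
  induction L as [|p L IH]; intros a b Hab H.
  - destruct (Req_dec a b) as [->|Hne]. apply ex_RInt_point. assert (a < b) by (destruct Hab; [auto|contradiction]).
    apply (ex_RInt_ext (fun _ => f ((a+b)/2))).
    + intros y Hy. rewrite Rmin_left in Hy by exact Hab. rewrite Rmax_right in Hy by exact Hab.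
      apply (H a b); try lra. intros z _ [].
    + apply ex_RInt_const.
  - destruct (Rlt_dec a p) as [Hap|Hap]; [destruct (Rlt_dec p b) as [Hpb|Hpb]|].
    + apply ex_RInt_Chasles with p.
      * apply IH; [lra|]. intros u v Hu Huv Hv Hn. apply H; try lra.
        intros y Hy [->|Hin]; [lra|]. exact (Hn y Hy Hin).
      * apply IH; [lra|]. intros u v Hu Huv Hv Hn. apply H; try lra.
        intros y Hy [->|Hin]; [lra|]. exact (Hn y Hy Hin).
    + apply IH; [lra|]. intros u v Hu Huv Hv Hn. apply H; try lra.
      intros y Hy [->|Hin]; [lra|]. exact (Hn y Hy Hin).
    + apply IH; [lra|]. intros u v Hu Huv Hv Hn. apply H; try lra.
      intros y Hy [->|Hin]; [lra|]. exact (Hn y Hy Hin).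
Qed.

Lemma RInt_le_except (f g : R -> R) (L : list R) : forall a b, a <= b ->
  ex_RInt f a b -> ex_RInt g a b ->
  (forall y, a < y < b -> ~ In y L -> f y <= g y) -> RInt f a b <= RInt g a b.
Proof.
  induction L as [|p L IH]; intros a b Hab Hf Hg H.
  - apply RInt_le; auto; intros y Hy; apply H; auto.
  - destruct (Rlt_dec a p) as [Hap|Hap]; [destruct (Rlt_dec p b) as [Hpb|Hpb]|].
    + assert (Hf1 : ex_RInt f a p) by exact (@ex_RInt_Chasles_1 R_CompleteNormedModule f a p b ltac:(lra) ltac:(assumption)).
      assert (Hf2 : ex_RInt f p b) by exact (@ex_RInt_Chasles_2 R_CompleteNormedModule f a p b ltac:(lra) ltac:(assumption)).
      assert (Hg1 : ex_RInt g a p) by exact (@ex_RInt_Chasles_1 R_CompleteNormedModule g a p b ltac:(lra) ltac:(assumption)).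
      assert (Hg2 : ex_RInt g p b) by exact (@ex_RInt_Chasles_2 R_CompleteNormedModule g a p b ltac:(lra) ltac:(assumption)).
      rewrite <- (RInt_Chasles f a p b), <- (RInt_Chasles g a p b) by auto.
      unfold plus; simpl.
      apply Rplus_le_compat; apply IH; try lra; auto;
      intros y Hy Hn; apply H; try lra; (intros [->|Hin]; [lra|auto]).
    + apply IH; auto. intros y Hy Hn; apply H; try lra; (intros [->|Hin]; [lra|auto]).
    + apply IH; auto. intros y Hy Hn; apply H; try lra; (intros [->|Hin]; [lra|auto]).
Qed.
Definition b2r (b : bool) : R := if b then 1 else 0.
Definition gen (m : nat) (x : nat -> R) (y : R) := forall j k, (j<m)%nat -> (k<m)%nat -> x j <> x k -> 2*y <> x j + x k.
Definition mids (m : nat) (x : nat -> R) : list R :=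
  flat_map (fun j => map (fun k => (x j + x k)/2) (seq 0 m)) (seq 0 m).

Lemma in_mids m x j k : (j<m)%nat -> (k<m)%nat -> In ((x j + x k)/2) (mids m x).
Proof.
  intros Hj Hk. unfold mids. apply in_flat_map. exists j. split.
  apply in_seq; lia. apply (in_map (fun k => (x j + x k)/2)). apply in_seq; lia.
Qed.

Lemma notin_mids_gen m x y : ~ In y (mids m x) -> gen m x y.
Proof.
  intros H j k Hj Hk Hne Heq. apply H. replace y with ((x j + x k)/2) by lra. apply in_mids; auto.
Qed.

Lemma Rleb_spec a b : Rleb a b = true <-> a <= b.
Proof. unfold Rleb. destruct (Rle_dec a b); split; intros; auto; try discriminate; contradiction. Qed.
Lemma Reqb_spec a b : Reqb a b = true <-> a = b.
Proof. unfold Reqb. destruct (Req_EM_T a b); split; intros; auto; try discriminate; contradiction. Qed.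

Lemma Rleb_ext a b c d : (a <= b <-> c <= d) -> Rleb a b = Rleb c d.
Proof.
  intros H. destruct (Rleb a b) eqn:E1, (Rleb c d) eqn:E2; auto.
  - apply Rleb_spec in E1. apply H in E1. apply Rleb_spec in E1. congruence.
  - apply Rleb_spec in E2. apply H in E2. apply Rleb_spec in E2. congruence.
Qed.
Lemma Reqb_ext a b c d : (a = b <-> c = d) -> Reqb a b = Reqb c d.
Proof.
  intros H. destruct (Reqb a b) eqn:E1, (Reqb c d) eqn:E2; auto.
  - apply Reqb_spec in E1. apply H in E1. apply Reqb_spec in E1. congruence.
  - apply Reqb_spec in E2. apply H in E2. apply Reqb_spec in E2. congruence.
Qed.

Lemma forallb_ext_in {A} (f g : A -> bool) l : (forall a, In a l -> f a = g a) -> forallb f l = forallb g l.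
Proof. induction l; simpl; intros H; auto. rewrite H, IHl; auto. Qed.
Lemma filter_ext_in' {A} (f g : A -> bool) l : (forall a, In a l -> f a = g a) -> filter f l = filter g l.
Proof. induction l; simpl; intros H; auto. rewrite H, IHl; auto. Qed.

Lemma closest_iff m x i y : closest m x i y = true <-> forall k, (k<m)%nat -> dist x i y <= dist x k y.
Proof.
  unfold closest. rewrite forallb_forall. split.
  - intros H k Hk. apply Rleb_spec. apply H. apply in_seq; lia.
  - intros H k Hk. apply in_seq in Hk. apply Rleb_spec. apply H. lia.
Qed.
Lemma farthest_iff m x i y : farthest m x i y = true <-> forall k, (k<m)%nat -> dist x k y <= dist x i y.
Proof.
  unfold farthest. rewrite forallb_forall. split.
  - intros H k Hk. apply Rleb_spec. apply H. apply in_seq; lia.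
  - intros H k Hk. apply in_seq in Hk. apply Rleb_spec. apply H. lia.
Qed.

Lemma abs_le_gt a b y : a + b < 2*y -> (Rabs (a-y) <= Rabs (b-y) <-> b <= a).
Proof. intros H; split; intros; unabs; lra. Qed.
Lemma abs_le_lt a b y : a + b > 2*y -> (Rabs (a-y) <= Rabs (b-y) <-> a <= b).
Proof. intros H; split; intros; unabs; lra. Qed.
Lemma abs_eq_ne a b y : a + b <> 2*y -> (Rabs (a-y) = Rabs (b-y) <-> a = b).
Proof.
  intros H; split; intros H1.
  - destruct (Req_dec a b); auto. exfalso. unabs; lra.
  - subst; auto.
Qed.

Lemma ntied_gen m x i y : (i<m)%nat -> gen m x y -> ntied m x i y = mult m x i.
Proof.
  intros Hi G. unfold ntied, mult. f_equal. apply filter_ext_in'. intros k Hk.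
  apply in_seq in Hk. apply Reqb_ext. unfold dist.
  destruct (Req_dec (x k) (x i)) as [E|E].
  - rewrite E; tauto.
  - apply abs_eq_ne. intros H. apply (G k i); auto; lia.
Qed.

Lemma mult_ge1 m x i : (i<m)%nat -> (1 <= mult m x i)%nat.
Proof.
  intros Hi. unfold mult. destruct (filter _ _) eqn:E; simpl; [|lia].
  assert (In i (filter (fun k => Reqb (x k) (x i)) (seq 0 m))).
  { apply filter_In. split. apply in_seq; lia. apply Reqb_spec; auto. }
  rewrite E in H; destruct H.
Qed.

Lemma score_gen c m x i y : (i<m)%nat -> gen m x y ->
  score c m x i y = (b2r (closest m x i y) - c * b2r (farthest m x i y)) / INR (mult m x i).
Proof.
  intros Hi G. unfold score. rewrite ntied_gen by auto.
  assert (0 < INR (mult m x i)) by (apply lt_0_INR; pose proof (mult_ge1 m x i Hi); lia).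
  unfold b2r. destruct (closest _ _ _ _), (farthest _ _ _ _); field; lra.
Qed.

Lemma score_locconst c m x i u v : (i<m)%nat -> (forall y, u < y < v -> ~ In y (mids m x)) ->
  forall y1 y2, u < y1 < v -> u < y2 < v -> score c m x i y1 = score c m x i y2.
Proof.
  intros Hi H y1 y2 H1 H2.
  assert (K : forall j k, (j<m)%nat -> (k<m)%nat ->
     Rleb (dist x j y1) (dist x k y1) = Rleb (dist x j y2) (dist x k y2) /\
     Reqb (dist x j y1) (dist x k y1) = Reqb (dist x j y2) (dist x k y2)).
  { intros j k Hj Hk. unfold dist.
    assert (Hm : ~ (u < (x j + x k)/2 < v)) by (intros Hm; apply (H _ Hm); apply in_mids; auto).
    destruct (Rle_lt_dec v ((x j + x k)/2)).
    - split.
      + apply Rleb_ext. rewrite !abs_le_lt by lra. tauto.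
      + apply Reqb_ext. rewrite !abs_eq_ne by lra. tauto.
    - assert ((x j + x k)/2 <= u) by (apply Rnot_lt_le; intros Hc; apply Hm; lra).
      split.
      + apply Rleb_ext. rewrite !abs_le_gt by lra. tauto.
      + apply Reqb_ext. rewrite !abs_eq_ne by lra. tauto. }
  assert (Ec : closest m x i y1 = closest m x i y2).
  { unfold closest. apply forallb_ext_in. intros k Hk; apply in_seq in Hk. apply K; lia. }
  assert (Ef : farthest m x i y1 = farthest m x i y2).
  { unfold farthest. apply forallb_ext_in. intros k Hk; apply in_seq in Hk. apply K; lia. }
  assert (En : ntied m x i y1 = ntied m x i y2).
  { unfold ntied. f_equal. apply filter_ext_in'. intros k Hk; apply in_seq in Hk. apply K; lia. }
  unfold score. rewrite Ec, Ef, En. reflexivity.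
Qed.

Lemma score_exRInt c m x i a b : (i<m)%nat -> a <= b -> ex_RInt (score c m x i) a b.
Proof.
  intros Hi Hab. apply (pc_exRInt _ (mids m x)); auto.
  intros u v _ _ _ Hn. apply score_locconst; auto.
Qed.

Definition V c m x i := RInt (score c m x i) 0 1.

Lemma value_V c m x i v : (i<m)%nat -> value c m x i v -> v = V c m x i.
Proof. intros Hi [pr <-]. unfold V. rewrite (RInt_Reals _ _ _ pr). auto. Qed.

Lemma value_ex c m x i : (i<m)%nat -> value c m x i (V c m x i).
Proof.
  intros Hi. pose proof (ex_RInt_Reals_0 _ _ _ (score_exRInt c m x i 0 1 Hi ltac:(lra))) as pr.
  exists pr. unfold V. rewrite (RInt_Reals _ _ _ pr). auto.
Qed.

Lemma nash_V c m x : nash c m x -> forall i t, (i<m)%nat -> 0 <= t <= 1 ->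
  V c m (upd x i t) i <= V c m x i.
Proof.
  intros [_ H] i t Hi Ht. apply (H i Hi t Ht); apply value_ex; auto.
Qed.
Definition ind (a b y : R) : R := if Rle_dec a y then if Rle_dec y b then 1 else 0 else 0.

Lemma ind_exRInt a b u w : u <= w -> ex_RInt (ind a b) u w.
Proof.
  intros H. apply (pc_exRInt _ [a;b]); auto.
  intros u' v' _ Huv _ Hn y1 y2 H1 H2.
  assert (a <= u' \/ v' <= a).
  { destruct (Rlt_dec u' a), (Rlt_dec a v'); try lra. exfalso; apply (Hn a); simpl; auto; lra. }
  assert (b <= u' \/ v' <= b).
  { destruct (Rlt_dec u' b), (Rlt_dec b v'); try lra. exfalso; apply (Hn b); simpl; auto; lra. }
  unfold ind. destruct (Rle_dec a y1), (Rle_dec y1 b), (Rle_dec a y2), (Rle_dec y2 b); auto; lra.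
Qed.

Lemma RInt_cst_ext (f : R -> R) a b k : a <= b -> (forall y, a < y < b -> f y = k) -> RInt f a b = k * (b - a).
Proof.
  intros H E. rewrite (RInt_ext f (fun _ => k)).
  - rewrite RInt_const. change (scal (b - a) k) with ((b-a)*k). apply Rmult_comm.
  - intros y Hy. rewrite Rmin_left in Hy by lra. rewrite Rmax_right in Hy by lra. auto.
Qed.

Lemma Chasles3 (f : R -> R) a b c : ex_RInt f a b -> ex_RInt f b c -> RInt f a c = RInt f a b + RInt f b c.
Proof. intros H1 H2. rewrite <- (RInt_Chasles f a b c H1 H2). reflexivity. Qed.

Lemma ind_int_eq a b : 0 <= a -> a <= b -> b <= 1 -> RInt (ind a b) 0 1 = b - a.
Proof.
  intros H1 H2 H3.
  rewrite (Chasles3 _ 0 a 1) by (apply ind_exRInt; lra).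
  rewrite (Chasles3 _ a b 1) by (apply ind_exRInt; lra).
  rewrite (RInt_cst_ext _ 0 a 0), (RInt_cst_ext _ a b 1), (RInt_cst_ext _ b 1 0); try lra;
  intros y Hy; unfold ind; destruct (Rle_dec a y), (Rle_dec y b); lra.
Qed.

Lemma ind_int_le a b : a <= b -> RInt (ind a b) 0 1 <= b - a.
Proof.
  intros H.
  set (a' := Rmax 0 (Rmin a 1)). set (b' := Rmax a' (Rmin b 1)).
  assert (0 <= a' <= 1) by (unfold a'; unfold Rmax, Rmin; repeat destruct Rle_dec; lra).
  assert (a' <= b' <= 1) by (unfold b'; unfold Rmax, Rmin; repeat destruct Rle_dec; lra).
  assert (b' - a' <= b - a) by (unfold b', a'; unfold Rmax, Rmin; repeat destruct Rle_dec; lra).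
  rewrite (RInt_ext _ (ind a' b')). rewrite ind_int_eq; lra.
  intros y Hy. rewrite Rmin_left in Hy by lra. rewrite Rmax_right in Hy by lra.
  unfold ind, b', a'; unfold Rmax, Rmin; repeat destruct Rle_dec; lra.
Qed.
Lemma count_zero (P : nat -> bool) m : (forall k, (k<m)%nat -> P k = false) -> length (filter P (seq 0 m)) = 0%nat.
Proof.
  induction m; intros H; auto. rewrite seq_S, filter_app, length_app, IHm by (intros; apply H; lia).
  simpl. rewrite H by lia. auto.
Qed.

Lemma count_one (P : nat -> bool) m i : (i<m)%nat -> P i = true -> (forall k, (k<m)%nat -> P k = true -> k = i) ->
  length (filter P (seq 0 m)) = 1%nat.
Proof.
  induction m; intros Hi Pi H; [lia|]. rewrite seq_S, filter_app, length_app. simpl.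
  destruct (Nat.eq_dec i m) as [->|Hne].
  - rewrite count_zero. rewrite Pi; auto.
    intros k Hk. destruct (P k) eqn:E; auto. apply H in E; lia.
  - rewrite IHm; auto; try lia.
    + destruct (P m) eqn:E; auto. apply H in E; lia.
Qed.

Lemma mult_alone m x i : (i<m)%nat -> (forall k, (k<m)%nat -> k <> i -> x k <> x i) -> mult m x i = 1%nat.
Proof.
  intros Hi H. unfold mult. apply (count_one _ m i); auto.
  - apply Reqb_spec; auto.
  - intros k Hk E. apply Reqb_spec in E. destruct (Nat.eq_dec k i); auto. exfalso; apply (H k); auto.
Qed.

Lemma mult_other m x i : (i<m)%nat -> (2 <= mult m x i)%nat -> exists k, (k<m)%nat /\ k <> i /\ x k = x i.
Proof.
  intros Hi H. destruct (Classical_Prop.classic (exists k, (k<m)%nat /\ k <> i /\ x k = x i)) as [E|E]; auto.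
  rewrite mult_alone in H; auto. lia. intros k Hk Hne Heq. apply E. eauto.
Qed.

Lemma upd_i x i t : upd x i t i = t.
Proof. unfold upd. destruct (Nat.eq_dec i i); congruence. Qed.
Lemma upd_k x i t k : k <> i -> upd x i t k = x k.
Proof. intros. unfold upd. destruct (Nat.eq_dec k i); congruence. Qed.

Lemma mult_upd m x i t : (i<m)%nat -> (forall k, (k<m)%nat -> k <> i -> x k <> t) -> mult m (upd x i t) i = 1%nat.
Proof.
  intros Hi H. apply mult_alone; auto. intros k Hk Hne. rewrite upd_i, upd_k; auto.
Qed.

Lemma count_disj (P Q : nat -> bool) l : (forall a, In a l -> P a = true -> Q a = true -> False) ->
  (length (filter P l) + length (filter Q l) <= length l)%nat.
Proof.
  induction l; simpl; intros H; auto.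
  destruct (P a) eqn:E1, (Q a) eqn:E2; simpl.
  - exfalso; eapply H; eauto.
  - pose proof (IHl ltac:(eauto)). lia.
  - pose proof (IHl ltac:(eauto)). lia.
  - pose proof (IHl ltac:(eauto)). lia.
Qed.

Lemma gap_ex m (x : nat -> R) p : exists G, 0 < G /\ forall k, (k<m)%nat -> x k <> p -> G <= Rabs (x k - p).
Proof.
  induction m.
  - exists 1; split; [lra|]. intros; lia.
  - destruct IHm as [G [HG H]]. destruct (Req_dec (x m) p) as [E|E].
    + exists G; split; auto. intros k Hk Hne. destruct (Nat.eq_dec k m); [subst; contradiction|]. apply H; auto; lia.
    + exists (Rmin G (Rabs (x m - p))). split.
      * apply Rmin_pos; auto. apply Rabs_pos_lt. lra.
      * intros k Hk Hne. destruct (Nat.eq_dec k m); [subst; apply Rmin_r|].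
        eapply Rle_trans; [apply Rmin_l|]. apply H; auto; lia.
Qed.

Lemma argmax_ex m (x : nat -> R) : (1 <= m)%nat -> exists b, (b<m)%nat /\ forall k, (k<m)%nat -> x k <= x b.
Proof.
  induction m; intros Hm; [lia|]. destruct (Nat.eq_dec m 0) as [->|Hne].
  - exists 0%nat; split; auto. intros k Hk. assert (k = 0%nat) by lia; subst; lra.
  - destruct IHm as [b [Hb H]]; [lia|]. destruct (Rle_dec (x m) (x b)).
    + exists b; split; [lia|]. intros k Hk. destruct (Nat.eq_dec k m); [subst; auto|]. apply H; lia.
    + exists m; split; [lia|]. intros k Hk. destruct (Nat.eq_dec k m); [subst; lra|].
      specialize (H k ltac:(lia)). lra.
Qed.

Lemma argmin_ex m (x : nat -> R) : (1 <= m)%nat -> exists b, (b<m)%nat /\ forall k, (k<m)%nat -> x b <= x k.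
Proof.
  intros Hm. destruct (argmax_ex m (fun k => - x k) Hm) as [b [Hb H]]. exists b; split; auto.
  intros k Hk. specialize (H k Hk). lra.
Qed.

Lemma nearest_right m (x : nat -> R) p : (exists k, (k<m)%nat /\ p < x k) ->
  exists b, (b<m)%nat /\ p < x b /\ forall k, (k<m)%nat -> p < x k -> x b <= x k.
Proof.
  assert (G : forall m, (exists b, (b<m)%nat /\ p < x b /\ forall k, (k<m)%nat -> p < x k -> x b <= x k)
                 \/ (forall k, (k<m)%nat -> x k <= p)).
  { clear m. induction m.
    - right; intros; lia.
    - destruct IHm as [[b [Hb [Hp H]]]|H].
      + left. destruct (Rle_dec (x b) (x m)).
        * exists b; repeat split; auto. intros k Hk Hpk. destruct (Nat.eq_dec k m); [subst; auto|]. apply H; auto; lia.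
        * destruct (Rlt_dec p (x m)).
          -- exists m; repeat split; auto. intros k Hk Hpk. destruct (Nat.eq_dec k m); [subst; lra|].
             specialize (H k ltac:(lia) Hpk); lra.
          -- exists b; repeat split; auto. intros k Hk Hpk. destruct (Nat.eq_dec k m); [subst; lra|]. apply H; auto; lia.
      + destruct (Rlt_dec p (x m)).
        * left; exists m; repeat split; auto. intros k Hk Hpk. destruct (Nat.eq_dec k m); [subst; lra|].
          specialize (H k ltac:(lia)); lra.
        * right. intros k Hk. destruct (Nat.eq_dec k m); [subst; lra|]. apply H; lia. }
  intros [k [Hk Hp]]. destruct (G m) as [E|E]; auto. specialize (E k Hk); lra.
Qed.
Definition nashV c m x := profile m x /\ forall i t, (i<m)%nat -> 0<=t<=1 -> V c m (upd x i t) i <= V c m x i.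
Lemma nash_nashV c m x : nash c m x -> nashV c m x.
Proof. intros Hn. split; [destruct Hn; auto|]. apply nash_V; auto. Qed.

Lemma RInt_plus' (f g : R -> R) a b : ex_RInt f a b -> ex_RInt g a b ->
  RInt (fun y => f y + g y) a b = RInt f a b + RInt g a b.
Proof. intros H1 H2. exact (RInt_plus f g a b H1 H2). Qed.
Lemma ex_RInt_plus' (f g : R -> R) a b : ex_RInt f a b -> ex_RInt g a b -> ex_RInt (fun y => f y + g y) a b.
Proof. intros H1 H2. exact (ex_RInt_plus f g a b H1 H2). Qed.
Lemma RInt_scal' (f : R -> R) a b k : ex_RInt f a b -> RInt (fun y => k * f y) a b = k * RInt f a b.
Proof. intros H1. exact (RInt_scal f a b k H1). Qed.
Lemma ex_RInt_scal' (f : R -> R) a b k : ex_RInt f a b -> ex_RInt (fun y => k * f y) a b.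
Proof. intros H1. exact (ex_RInt_scal f a b k H1). Qed.

Lemma mult_ge2 m x i k : (i<m)%nat -> (k<m)%nat -> k <> i -> x k = x i -> (2 <= mult m x i)%nat.
Proof.
  intros Hi Hk Hne E. unfold mult.
  change 2%nat with (length [i;k]). apply NoDup_incl_length.
  - constructor. simpl; intros [H|[]]; auto. constructor; [simpl; auto|constructor].
  - intros z [<-|[<-|[]]]; apply filter_In; split; try (apply in_seq; lia); apply Reqb_spec; auto.
Qed.

Lemma mult1_alone m x i k : (i<m)%nat -> mult m x i = 1%nat -> (k<m)%nat -> k <> i -> x k <> x i.
Proof. intros Hi H Hk Hne E. pose proof (mult_ge2 m x i k Hi Hk Hne E). lia. Qed.

Lemma score_gen1 c m x i y : (i<m)%nat -> gen m x y -> mult m x i = 1%nat ->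
  score c m x i y = b2r (closest m x i y) - c * b2r (farthest m x i y).
Proof. intros Hi G E. rewrite score_gen, E by auto. simpl INR. field. Qed.

Lemma generic m x y (L1 : list R) : ~ In y (mids m x ++ L1) -> gen m x y.
Proof. intros H. apply notin_mids_gen. intros Hc; apply H; apply in_or_app; auto. Qed.
Lemma generic2 (L0 : list R) y L1 : ~ In y (L0 ++ L1) -> ~ In y L1.
Proof. intros H Hc; apply H; apply in_or_app; auto. Qed.

Lemma lemB c m x i : 0 <= c -> nashV c m x -> (i<m)%nat -> mult m x i = 1%nat ->
  (forall k, (k<m)%nat -> x i <= x k) -> (exists k, (k<m)%nat /\ x i < x k) -> False.
Proof.
  intros Hc Hn Hi H1 Hmin Hex.
  assert (Hprof : profile m x) by (destruct Hn; auto).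
  set (p := x i) in *.
  destruct (nearest_right m x p Hex) as [b2 [Hb2 [Hpb Hnear]]].
  assert (Hall : forall k, (k<m)%nat -> k <> i -> x b2 <= x k).
  { intros k Hk Hne. apply Hnear; auto. pose proof (Hmin k Hk). pose proof (mult1_alone m x i k Hi H1 Hk Hne). fold p in H0. lra. }
  assert (Hb2i : b2 <> i) by (intros ->; fold p in Hpb; lra).
  set (t := (p + x b2)/2).
  assert (Hp01 := Hprof i Hi). assert (Hb01 := Hprof b2 Hb2). fold p in Hp01.
  set (x' := upd x i t).
  assert (HN := proj2 Hn i t Hi ltac:(unfold t; lra)). fold x' in HN.
  set (a := t). set (bb := (t + x b2)/2).
  assert (Hsum : RInt (fun y => score c m x i y + ind a bb y) 0 1 <= V c m x' i).
  { apply (RInt_le_except _ _ (mids m x ++ mids m x' ++ [a; bb])); [lra| | |].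
    - apply ex_RInt_plus'. apply score_exRInt; auto; lra. apply ind_exRInt; lra.
    - apply score_exRInt; auto; lra.
    - intros y Hy Hny.
      assert (G1 := generic _ _ _ _ Hny). apply generic2 in Hny.
      assert (G2 := generic _ _ _ _ Hny). apply generic2 in Hny.
      assert (Hya : y <> a) by (intros ->; apply Hny; simpl; auto).
      assert (Hyb : y <> bb) by (intros ->; apply Hny; simpl; auto).
      assert (Mx' : mult m x' i = 1%nat).
      { apply mult_upd; auto. intros k Hk Hne. pose proof (Hall k Hk Hne). unfold t; lra. }
      rewrite (score_gen1 c m x i y), (score_gen1 c m x' i y); auto.
      assert (C1 : closest m x i y = true -> closest m x' i y = true).
      { rewrite !closest_iff. intros H k Hk. specialize (H k Hk). unfold dist, x' in *. rewrite upd_i.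
        destruct (Nat.eq_dec k i) as [->|Hne]; [rewrite upd_i; lra|]. rewrite upd_k by auto.
        pose proof (Hall k Hk Hne). fold p in H. unfold t. unabs; lra. }
      assert (C2 : a <= y <= bb -> closest m x' i y = true /\ closest m x i y = false).
      { intros Hab. split.
        - apply closest_iff. intros k Hk. unfold dist, x'. rewrite upd_i.
          destruct (Nat.eq_dec k i) as [->|Hne]; [rewrite upd_i; lra|]. rewrite upd_k by auto.
          pose proof (Hall k Hk Hne). unfold bb, a, t in *. assert (a <> y) by auto. unfold a, t in *. unabs; lra.
        - destruct (closest m x i y) eqn:E; auto. rewrite closest_iff in E. specialize (E b2 Hb2).
          unfold dist in E. fold p in E. unfold bb, a, t in *. assert (a <> y) by auto. unfold a, t in *. unabs; lra. }
      assert (F1 : farthest m x' i y = true -> farthest m x i y = true).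
      { rewrite !farthest_iff. intros H k Hk. pose proof (H b2 Hb2) as Hb. unfold dist, x' in *.
        rewrite upd_i in *. rewrite upd_k in Hb by auto.
        destruct (Nat.eq_dec k i) as [->|Hne]; [lra|]. specialize (H k Hk). rewrite upd_k in H by auto.
        fold p. unfold t in *. unabs; lra. }
      assert (Hfa : c * b2r (farthest m x' i y) <= c * b2r (farthest m x i y)).
      { apply Rmult_le_compat_l; auto. destruct (farthest m x' i y), (farthest m x i y); simpl; try lra;
        try (specialize (F1 eq_refl); discriminate). }
      unfold ind. destruct (Rle_dec a y), (Rle_dec y bb).
      + destruct (C2 ltac:(lra)) as [-> ->]. simpl. lra.
      + destruct (closest m x i y) eqn:E1; [rewrite (C1 eq_refl)|]; destruct (closest m x' i y); simpl; lra.
      + destruct (closest m x i y) eqn:E1; [rewrite (C1 eq_refl)|]; destruct (closest m x' i y); simpl; lra.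
      + destruct (closest m x i y) eqn:E1; [rewrite (C1 eq_refl)|]; destruct (closest m x' i y); simpl; lra. }
  assert (E1 : ex_RInt (score c m x i) 0 1) by (apply score_exRInt; auto; lra).
  assert (E2 : ex_RInt (ind a bb) 0 1) by (apply ind_exRInt; lra).
  rewrite (RInt_plus' _ _ _ _ E1 E2) in Hsum.
  rewrite ind_int_eq in Hsum by (unfold bb, a, t; lra).
  unfold V in HN, Hsum. unfold bb, a, t in Hsum. lra.
Qed.
Lemma three_pts a0 t b0 y : a0 < t -> t < b0 -> Rabs (a0 - y) <= Rabs (t - y) -> Rabs (b0 - y) <= Rabs (t - y) -> False.
Proof. intros; unabs; lra. Qed.

Lemma delta_ex c G p : 0 <= c -> 0 < G -> 0 <= p -> exists d, 0 < d /\ (4 + 2*c) * d <= G /\ (0 < p -> d <= p).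
Proof.
  intros Hc HG Hp. set (D := 4 + 2*c).
  destruct (Rlt_dec 0 p) as [Hp'|Hp'].
  - set (M := Rmin G p). assert (0 < M) by (apply Rmin_pos; auto).
    exists (M / D). assert (E : M / D * D = M) by (unfold D; field; lra).
    assert (0 < M / D) by (apply Rdiv_lt_0_compat; unfold D; lra).
    assert (M <= G) by apply Rmin_l. assert (M <= p) by apply Rmin_r.
    repeat split; auto; [|intros _]; unfold D in *; nra.
  - exists (G / D). assert (E : G / D * D = G) by (unfold D; field; lra).
    assert (0 < G / D) by (apply Rdiv_lt_0_compat; unfold D; lra).
    repeat split; auto; [|intros; lra]. unfold D in *; nra.
Qed.

Lemma RInt_lin4 (f g h k : R -> R) c : ex_RInt f 0 1 -> ex_RInt g 0 1 -> ex_RInt h 0 1 -> ex_RInt k 0 1 ->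
  RInt (fun y => (f y + g y) + (h y + c * k y)) 0 1 = RInt f 0 1 + RInt g 0 1 + (RInt h 0 1 + c * RInt k 0 1).
Proof.
  intros Hf Hg Hh Hk.
  rewrite (RInt_plus' (fun y => f y + g y) (fun y => h y + c * k y)).
  - rewrite RInt_plus', RInt_plus', RInt_scal'; auto. apply ex_RInt_scal'; auto.
  - apply ex_RInt_plus'; auto.
  - apply ex_RInt_plus'; auto. apply ex_RInt_scal'; auto.
Qed.

Lemma lemA c m x i : 0 <= c -> nashV c m x -> (i<m)%nat -> (3 <= mult m x i)%nat ->
  (exists k, (k<m)%nat /\ x i < x k) -> False.
Proof.
  intros Hc Hn Hi H3 Hex.
  assert (Hprof : profile m x) by (destruct Hn; auto).
  set (p := x i) in *. set (n := mult m x i) in *.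
  destruct (mult_other m x i Hi ltac:(lia)) as [k0 [Hk0 [Hk0i Hk0p]]]. fold p in Hk0p.
  destruct (argmax_ex m x ltac:(lia)) as [b [Hb Hmax]].
  assert (Hpb : p < x b) by (destruct Hex as [k [Hk Hpk]]; pose proof (Hmax k Hk); lra).
  assert (Hbi : b <> i) by (intros ->; fold p in Hpb; lra).
  destruct (gap_ex m x p) as [G [HG Hgap]].
  assert (HGb : G <= x b - p) by (pose proof (Hgap b Hb ltac:(lra)); unabs; lra).
  assert (Hp01 := Hprof i Hi). assert (Hb01 := Hprof b Hb). fold p in Hp01.
  destruct (delta_ex c G p Hc HG ltac:(lra)) as [d [Hd [HdG Hdp]]].
  assert (HdG2 : d < G / 2) by nra.
  set (xp := upd x i (p + d)). set (xm := upd x i (p - d)).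
  assert (Hfar : forall k, (k<m)%nat -> k <> i -> x k <> p -> (x k <= p - G \/ p + G <= x k)).
  { intros k Hk Hne Hne'. pose proof (Hgap k Hk Hne'). unabs; lra. }
  assert (Mp : mult m xp i = 1%nat).
  { apply mult_upd; auto. intros k Hk Hne E. destruct (Req_dec (x k) p) as [E'|E']; [lra|].
    destruct (Hfar k Hk Hne E'); lra. }
  assert (Mm : mult m xm i = 1%nat).
  { apply mult_upd; auto. intros k Hk Hne E. destruct (Req_dec (x k) p) as [E'|E']; [lra|].
    destruct (Hfar k Hk Hne E'); lra. }
  assert (HNp := proj2 Hn i (p + d) Hi ltac:(lra)). fold xp in HNp.
  set (L := mids m x ++ mids m xp ++ mids m xm ++ [p - d/2; p + d/2; p + G/2]).
  assert (Gen : forall y, ~ In y L -> gen m x y /\ gen m xp y /\ gen m xm y /\ y <> p + d/2 /\ y <> p + G/2).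
  { intros y Hy. unfold L in Hy. split; [eapply generic; eauto|]. apply generic2 in Hy.
    split; [eapply generic; eauto|]. apply generic2 in Hy.
    split; [eapply generic; eauto|]. apply generic2 in Hy.
    split; intros ->; apply Hy; simpl; auto. }
  assert (FAp : forall y, farthest m xp i y = false).
  { intros y. destruct (farthest m xp i y) eqn:E; auto. exfalso. rewrite farthest_iff in E.
    pose proof (E k0 Hk0) as E1. pose proof (E b Hb) as E2. unfold dist, xp in E1, E2.
    rewrite upd_i, upd_k in E1, E2 by auto. rewrite Hk0p in E1.
    apply (three_pts p (p+d) (x b) y); auto; lra. }
  assert (Sp : forall y, ~ In y L -> score c m xp i y = b2r (closest m xp i y)).
  { intros y Hy. destruct (Gen y Hy) as [_ [G2 _]]. rewrite score_gen1, FAp; auto. simpl; ring. }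
  assert (S0 : forall y, ~ In y L -> INR n * score c m x i y = b2r (closest m x i y) - c * b2r (farthest m x i y)).
  { intros y Hy. destruct (Gen y Hy) as [G1 _]. rewrite score_gen by auto. fold n.
    assert (0 < INR n) by (apply lt_0_INR; lia). field; lra. }
  assert (CLp : forall y, closest m x i y = true -> 2*p + d < 2*y -> closest m xp i y = true).
  { intros y H Hy. rewrite closest_iff in *. intros k Hk. specialize (H k Hk). unfold dist, xp in *.
    rewrite upd_i. destruct (Nat.eq_dec k i) as [->|Hne]; [rewrite upd_i; lra|]. rewrite upd_k by auto.
    fold p in H. assert (Rabs (p + d - y) < Rabs (p - y)) by (unabs; lra). lra. }
  assert (CLm : forall y, closest m x i y = true -> 2*y < 2*p - d -> closest m xm i y = true).
  { intros y H Hy. rewrite closest_iff in *. intros k Hk. specialize (H k Hk). unfold dist, xm in *.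
    rewrite upd_i. destruct (Nat.eq_dec k i) as [->|Hne]; [rewrite upd_i; lra|]. rewrite upd_k by auto.
    fold p in H. assert (Rabs (p - d - y) < Rabs (p - y)) by (unabs; lra). lra. }
  assert (Es : forall z, ex_RInt (score c m z i) 0 1) by (intros z; apply score_exRInt; auto; lra).
  assert (Ei : forall a b, ex_RInt (ind a b) 0 1) by (intros; apply ind_exRInt; lra).
  assert (Low : G/2 - d/2 <= V c m xp i).
  { replace (G/2 - d/2) with ((p+G/2) - (p+d/2)) by ring. rewrite <- (ind_int_eq (p+d/2) (p+G/2)) by lra. unfold V. apply (RInt_le_except _ _ L); auto; [lra|].
    intros y Hy HyL. rewrite Sp by auto. destruct (Gen y HyL) as [_ [_ [_ [N1 N2]]]].
    unfold ind. destruct (Rle_dec (p + d/2) y), (Rle_dec y (p + G/2)); try (destruct closest; simpl; lra).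
    replace (closest m xp i y) with true; [simpl; lra|]. symmetry.
    apply closest_iff. intros k Hk. unfold dist, xp. rewrite upd_i.
    destruct (Nat.eq_dec k i) as [->|Hne]; [rewrite upd_i; lra|]. rewrite upd_k by auto.
    destruct (Req_dec (x k) p) as [E|E].
    - rewrite E. unabs; lra.
    - destruct (Hfar k Hk Hne E); unabs; lra. }
  assert (HN3 : INR 3 <= INR n) by (apply le_INR; lia). replace (INR 3) with 3 in HN3 by (simpl; lra).
  assert (Hsc : ex_RInt (fun y => INR n * score c m x i y) 0 1) by (apply ex_RInt_scal'; auto).
  destruct (Rlt_dec 0 p) as [Hp0|Hp0].
  -
    assert (Hdp := Hdp Hp0).
    assert (HNm := proj2 Hn i (p - d) Hi ltac:(lra)). fold xm in HNm.
    assert (Sm : forall y, ~ In y L -> score c m xm i y = b2r (closest m xm i y) - c * b2r (farthest m xm i y)).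
    { intros y Hy. destruct (Gen y Hy) as [_ [_ [G3 _]]]. rewrite score_gen1; auto. }
    assert (FAm : forall y, farthest m xm i y = true -> farthest m x i y = true \/ (x b + p - d <= 2*y < x b + p)).
    { intros y H. pose proof H as H'. rewrite farthest_iff in H. pose proof (H b Hb) as Eb.
      unfold dist, xm in Eb. rewrite upd_i, upd_k in Eb by auto.
      destruct (Classical_Prop.classic (exists a, (a<m)%nat /\ x a < p)) as [[a [Ha Hap]]|Hnone].
      - exfalso. assert (Hai : a <> i) by (intros ->; fold p in Hap; lra).
        pose proof (H a Ha) as Ea. unfold dist, xm in Ea. rewrite upd_i, upd_k in Ea by auto.
        destruct (Hfar a Ha Hai ltac:(lra)); [|lra].
        apply (three_pts (x a) (p - d) (x b) y); auto; lra.
      - destruct (Rle_dec (x b + p) (2*y)).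
        + left. apply farthest_iff. intros k Hk. unfold dist. fold p.
          assert (p <= x k) by (apply Rnot_lt_le; intros Hc'; apply Hnone; eauto).
          pose proof (Hmax k Hk). unabs; lra.
        + right. split; [|lra]. unabs; lra. }
    set (a2 := (x b + p - d)/2). set (b2 := (x b + p)/2).
    assert (Up : RInt (fun y => INR n * score c m x i y) 0 1 <=
                 RInt (fun y => (score c m xp i y + score c m xm i y) + (ind (p - d/2) (p + d/2) y + c * ind a2 b2 y)) 0 1).
    { apply (RInt_le_except _ _ L); auto; [lra| |].
      - apply ex_RInt_plus'; apply ex_RInt_plus'; auto. apply ex_RInt_scal'; auto.
      - intros y Hy HyL. rewrite S0, Sp, Sm by auto.
        assert (I1 : b2r (closest m x i y) <= b2r (closest m xp i y) + b2r (closest m xm i y) + ind (p - d/2) (p + d/2) y).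
        { destruct (closest m x i y) eqn:E.
          - destruct (Rlt_dec (2*p + d) (2*y)).
            + rewrite (CLp y E r). destruct (closest m xm i y); unfold ind; simpl;
              repeat destruct Rle_dec; lra.
            + destruct (Rlt_dec (2*y) (2*p - d)).
              * rewrite (CLm y E r). destruct (closest m xp i y); unfold ind; simpl;
                repeat destruct Rle_dec; lra.
              * unfold ind. destruct (Rle_dec (p - d/2) y); [|lra]. destruct (Rle_dec y (p + d/2)); [|lra].
                destruct (closest m xp i y), (closest m xm i y); simpl; lra.
          - destruct (closest m xp i y), (closest m xm i y); unfold ind; simpl; repeat destruct Rle_dec; lra. }
        assert (I2 : b2r (farthest m xm i y) <= b2r (farthest m x i y) + ind a2 b2 y).
        { destruct (farthest m xm i y) eqn:E.
          - destruct (FAm y E) as [-> | Hr].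
            + unfold ind; simpl; repeat destruct Rle_dec; lra.
            + destruct (farthest m x i y); unfold ind, a2, b2; simpl; repeat destruct Rle_dec; lra.
          - destruct (farthest m x i y); unfold ind; simpl; repeat destruct Rle_dec; lra. }
        assert (c * b2r (farthest m xm i y) <= c * (b2r (farthest m x i y) + ind a2 b2 y))
          by (apply Rmult_le_compat_l; auto).
        lra. }
    rewrite RInt_scal' in Up by auto.
    rewrite (RInt_lin4 (score c m xp i) (score c m xm i) (ind (p - d/2) (p + d/2)) (ind a2 b2)) in Up by auto.
    assert (J1 := ind_int_le (p - d/2) (p + d/2) ltac:(lra)).
    assert (J2 := ind_int_le a2 b2 ltac:(unfold a2, b2; lra)).
    assert (cJ2 : c * RInt (ind a2 b2) 0 1 <= c * (b2 - a2)) by (apply Rmult_le_compat_l; auto).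
    unfold V in *. fold (V c m x i) (V c m xp i) (V c m xm i) in *.
    replace (c * (b2 - a2)) with (c * d / 2) in cJ2 by (unfold a2, b2; field).
    assert (0 < V c m x i) by lra.
    assert (3 * V c m x i <= INR n * V c m x i) by (apply Rmult_le_compat_r; lra).
    assert (0 <= c * d) by (apply Rmult_le_pos; lra).
    replace ((4 + 2*c) * d) with (4*d + 2*(c*d)) in HdG by ring.
    lra.
  -
    assert (Hp0' : p = 0) by lra.
    assert (Up : RInt (fun y => INR n * score c m x i y) 0 1 <=
                 RInt (fun y => score c m xp i y + ind (p - d/2) (p + d/2) y) 0 1).
    { apply (RInt_le_except _ _ L); auto; [lra| |].
      - apply ex_RInt_plus'; auto.
      - intros y Hy HyL. rewrite S0, Sp by auto.
        assert (0 <= c * b2r (farthest m x i y)) by (apply Rmult_le_pos; auto; destruct (farthest m x i y); simpl; lra).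
        assert (b2r (closest m x i y) <= b2r (closest m xp i y) + ind (p - d/2) (p + d/2) y).
        { destruct (closest m x i y) eqn:E.
          - destruct (Rlt_dec (2*p + d) (2*y)).
            + rewrite (CLp y E r). unfold ind; simpl; repeat destruct Rle_dec; lra.
            + unfold ind. destruct (Rle_dec (p - d/2) y); [|lra]. destruct (Rle_dec y (p + d/2)); [|lra].
              destruct (closest m xp i y); simpl; lra.
          - destruct (closest m xp i y); unfold ind; simpl; repeat destruct Rle_dec; lra. }
        lra. }
    rewrite RInt_scal' in Up by auto.
    rewrite RInt_plus' in Up by auto.
    assert (J1 := ind_int_le (p - d/2) (p + d/2) ltac:(lra)).
    unfold V in *. fold (V c m x i) (V c m xp i) in *.
    assert (0 < V c m x i) by lra.
    assert (3 * V c m x i <= INR n * V c m x i) by (apply Rmult_le_compat_r; lra).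
    assert (0 <= c * d) by (apply Rmult_le_pos; lra).
    replace ((4 + 2*c) * d) with (4*d + 2*(c*d)) in HdG by ring.
    lra.
Qed.
Definition refl (x : nat -> R) : nat -> R := fun k => 1 - x k.

Lemma dist_refl x j y : dist (refl x) j y = dist x j (1 - y).
Proof. unfold dist, refl. rewrite <- Rabs_Ropp. f_equal. ring. Qed.

Lemma score_refl c m x i y : score c m (refl x) i y = score c m x i (1 - y).
Proof.
  unfold score, closest, farthest, ntied.
  rewrite (forallb_ext_in (fun j => Rleb (dist (refl x) i y) (dist (refl x) j y)) (fun j => Rleb (dist x i (1-y)) (dist x j (1-y))))
    by (intros; rewrite !dist_refl; auto).
  rewrite (forallb_ext_in (fun j => Rleb (dist (refl x) j y) (dist (refl x) i y)) (fun j => Rleb (dist x j (1-y)) (dist x i (1-y))))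
    by (intros; rewrite !dist_refl; auto).
  rewrite (filter_ext_in' (fun j => Reqb (dist (refl x) j y) (dist (refl x) i y)) (fun j => Reqb (dist x j (1-y)) (dist x i (1-y))))
    by (intros; rewrite !dist_refl; auto).
  reflexivity.
Qed.

Lemma upd_refl x i t : upd (refl x) i t = refl (upd x i (1 - t)).
Proof.
  apply FunctionalExtensionality.functional_extensionality. intros k. unfold upd, refl.
  destruct (Nat.eq_dec k i); ring.
Qed.

Lemma RInt_refl (f : R -> R) : ex_RInt f 0 1 -> RInt (fun y => f (1 - y)) 0 1 = RInt f 0 1.
Proof.
  intros Hf.
  set (g := fun y => scal (-1) (f (-1 * y + 1))).
  assert (Hf' : ex_RInt f (-1 * 0 + 1) (-1 * 1 + 1)).
  { replace (-1 * 0 + 1) with 1 by ring. replace (-1 * 1 + 1) with 0 by ring. apply ex_RInt_swap; auto. }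
  assert (Hg : ex_RInt g 0 1) by exact (ex_RInt_comp_lin f (-1) 1 0 1 Hf').
  assert (Eg : RInt g 0 1 = RInt f (-1 * 0 + 1) (-1 * 1 + 1)) by exact (RInt_comp_lin f (-1) 1 0 1 Hf').
  replace (-1 * 0 + 1) with 1 in Eg by ring. replace (-1 * 1 + 1) with 0 in Eg by ring.
  rewrite <- (opp_RInt_swap f 0 1 Hf) in Eg.
  rewrite (RInt_ext _ (fun y => -1 * g y)).
  - rewrite RInt_scal' by auto. rewrite Eg. change (opp (RInt f 0 1)) with (- RInt f 0 1). assert (K : forall a:R, -1 * - a = a) by (intros; ring). apply K.
  - intros y _. unfold g. change (scal (-1) (f (-1 * y + 1))) with (-1 * f (-1 * y + 1)).
    replace (-1 * y + 1) with (1 - y) by ring. assert (K : forall a:R, a = -1 * (-1 * a)) by (intros; ring). apply K.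
Qed.

Lemma V_refl c m x i : (i<m)%nat -> V c m (refl x) i = V c m x i.
Proof.
  intros Hi. unfold V. rewrite (RInt_ext _ (fun y => score c m x i (1 - y))).
  - apply RInt_refl. apply score_exRInt; auto; lra.
  - intros; apply score_refl.
Qed.

Lemma nashV_refl c m x : nashV c m x -> nashV c m (refl x).
Proof.
  intros [Hp H]. split.
  - intros k Hk. unfold refl. specialize (Hp k Hk). lra.
  - intros i t Hi Ht. rewrite upd_refl, !V_refl by auto. apply H; auto; lra.
Qed.

Lemma mult_refl m x j : mult m (refl x) j = mult m x j.
Proof.
  unfold mult. f_equal. apply filter_ext_in'. intros k _. apply Reqb_ext. unfold refl. split; intros; lra.
Qed.

Lemma part12 c m x : 0 <= c -> nashV c m x -> nonconvergent m x ->
  (forall j, (j < m)%nat -> (mult m x j <= 2)%nat) /\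
  (forall j, (j < m)%nat -> (forall k, (k < m)%nat -> x j <= x k) -> mult m x j = 2%nat).
Proof.
  intros Hc Hn [j1 [k1 [Hj1 [Hk1 Hne]]]].
  assert (P1 : forall j, (j < m)%nat -> (mult m x j <= 2)%nat).
  { intros j Hj. destruct (Nat.le_gt_cases (mult m x j) 2) as [|H3]; auto. exfalso.
    destruct (Classical_Prop.classic (exists k, (k<m)%nat /\ x j < x k)) as [E|E].
    - apply (lemA c m x j); auto.
    - assert (Hle : forall k, (k<m)%nat -> x k <= x j) by (intros k Hk; apply Rnot_lt_le; intros Hc'; apply E; eauto).
      apply (lemA c m (refl x) j); auto. apply nashV_refl; auto. rewrite mult_refl; lia.
      destruct (Req_dec (x j1) (x j)).
      + exists k1. split; auto. unfold refl. pose proof (Hle k1 Hk1). assert (x k1 <> x j) by congruence. lra.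
      + exists j1. split; auto. unfold refl. pose proof (Hle j1 Hj1). lra. }
  split; auto.
  intros j Hj Hmin. pose proof (P1 j Hj). pose proof (mult_ge1 m x j Hj).
  destruct (Nat.eq_dec (mult m x j) 1) as [E|E]; [|lia]. exfalso.
  apply (lemB c m x j); auto.
  destruct (Req_dec (x j1) (x j)).
  + exists k1. split; auto. pose proof (Hmin k1 Hk1). assert (x k1 <> x j) by congruence. lra.
  + exists j1. split; auto. pose proof (Hmin j1 Hj1). lra.
Qed.

Theorem lemma4 (c : R) (m : nat) (x : nat -> R) :
  0 <= c -> (2 <= m)%nat -> nash c m x -> nonconvergent m x ->
  (forall j, (j < m)%nat -> (mult m x j <= 2)%nat) /\
  (forall j, (j < m)%nat -> (forall k, (k < m)%nat -> x j <= x k) -> mult m x j = 2%nat) /\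
  (forall j, (j < m)%nat -> (forall k, (k < m)%nat -> x k <= x j) -> mult m x j = 2%nat) /\
  m <> 3%nat.
Proof.
  intros Hc Hm Hn Hnc.
  apply nash_nashV in Hn.
  destruct (part12 c m x Hc Hn Hnc) as [P1 P2].
  assert (Hncr : nonconvergent m (refl x)).
  { destruct Hnc as [j1 [k1 [Hj1 [Hk1 Hne]]]]. exists j1, k1. repeat split; auto. unfold refl. intros E; apply Hne; lra. }
  destruct (part12 c m (refl x) Hc (nashV_refl c m x Hn) Hncr) as [_ P2r].
  assert (P3 : forall j, (j < m)%nat -> (forall k, (k < m)%nat -> x k <= x j) -> mult m x j = 2%nat).
  { intros j Hj H. rewrite <- mult_refl. apply P2r; auto. intros k Hk. unfold refl. specialize (H k Hk). lra. }
  repeat split; auto.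
  intros E3.
  destruct (argmin_ex m x ltac:(lia)) as [j0 [Hj0 Hmin]].
  destruct (argmax_ex m x ltac:(lia)) as [j1 [Hj1 Hmax]].
  assert (Hlt : x j0 < x j1).
  { destruct Hnc as [a [b [Ha [Hb Hne]]]]. pose proof (Hmin a Ha). pose proof (Hmin b Hb).
    pose proof (Hmax a Ha). pose proof (Hmax b Hb). destruct (Req_dec (x j0) (x j1)); [|lra].
    exfalso. apply Hne. lra. }
  pose proof (P2 j0 Hj0 Hmin) as M0. pose proof (P3 j1 Hj1 Hmax) as M1.
  pose proof (count_disj (fun k => Reqb (x k) (x j0)) (fun k => Reqb (x k) (x j1)) (seq 0 m)) as D.
  unfold mult in M0, M1. rewrite M0, M1, length_seq in D.
  assert (4 <= m)%nat; [|lia]. apply D. intros a _ Ha Hb. apply Reqb_spec in Ha, Hb. lra.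
Qed.
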